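(* Let $W,S,A$ be finite sets, let $\beta\in\Delta_{W,S}$ be a Markov kernel $\beta(s|w)$, and let $f_\beta\colon\Delta_{S,A}\to\Delta_{W,A}$ be the linear map $\pi(a|s)\mapsto\sum_s\beta(s|w)\pi(a|s)$. Let $U=\{s\in S\colon|\operatorname{supp}(\beta(s|\cdot))|>1\}$ be the set of sensor states that can be obtained from several world states. Then the set $G=f_\beta(\Delta_{S,A})$ can be written as $G=\bigcup_{\theta\in\Theta}G_\theta$ for some index set $\Theta$, where each $G_\theta$ is a Cartesian product of convex sets, $G_\theta=\prod_{w\in W}G_{\theta,w}$ with each $G_{\theta,w}\subseteq\Delta_A$ convex, and each vertex of $G_\theta$ lies in a face of $G$ of dimension at most $|U|(|A|-1)$.
   Context: $\Delta_X$ is the probability simplex on a finite set $X$; $\Delta_{X,Y}=\prod_{x\in X}\Delta_Y$ is the polytope of Markov kernels $p(y|x)$ from $X$ to $Y$. $\operatorname{supp}(\beta(s|\cdot))=\{w\in W\colon\beta(s|w)>0\}$. $G$ is a polytope (image of a polytope under a linear map). *)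

(* Defs.v *)
From mathcomp Require Import all_boot all_order all_algebra.
Set Implicit Arguments. Unset Strict Implicit. Unset Printing Implicit Defensive.
Import Order.TTheory GRing.Theory Num.Theory.
Local Open Scope ring_scope.

Definition simplex (R : realFieldType) (A : finType) (p : A -> R) : Prop :=
  (forall a, 0 <= p a) /\ \sum_(a : A) p a = 1.

(* Markov kernels Delta_{X,Y} = prod_{x in X} Delta_Y, written k x y = k(y|x). *)
Definition kernel (R : realFieldType) (X Y : finType) (k : X -> Y -> R) : Prop :=
  forall x, simplex (k x).

Definition fbeta (R : realFieldType) (W S A : finType)
  (beta : W -> S -> R) (pi : S -> A -> R) : W -> A -> R :=
  fun w a => \sum_(s : S) beta w s * pi s a.

Definition Gset (R : realFieldType) (W S A : finType) (beta : W -> S -> R)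
  (g : W -> A -> R) : Prop :=
  exists pi : S -> A -> R, kernel pi /\ g = fbeta beta pi.

Definition Uset (R : realFieldType) (W S : finType) (beta : W -> S -> R) : {set S} :=
  [set s | (1 < #|[set w | (0 < beta w s)%R]|)%N ].

Definition convex_set (R : realFieldType) (A : finType) (C : (A -> R) -> Prop) : Prop :=
  forall x y t, C x -> C y -> 0 <= t <= 1 ->
    C (fun a => t * x a + (1 - t) * y a).

Definition vertex (R : realFieldType) (W A : finType) (C : (W -> A -> R) -> Prop)
  (x : W -> A -> R) : Prop :=
  C x /\ forall y z t, C y -> C z -> 0 < t < 1 ->
    x = (fun w a => t * y w a + (1 - t) * z w a) -> y = x /\ z = x.

(* F is a face of the polytope G (faces of a polytope are exactly the sets
   G cap {l = c} for linear functionals l with l <= c on G; this includes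
   G itself and the empty face). *)
Definition face (R : realFieldType) (W A : finType) (G F : (W -> A -> R) -> Prop) : Prop :=
  exists (l : W -> A -> R) (c : R),
    (forall y, G y -> \sum_(w : W) \sum_(a : A) l w a * y w a <= c) /\
    (forall x, F x <-> (G x /\ \sum_(w : W) \sum_(a : A) l w a * x w a = c)).

Definition affdim_le (R : realFieldType) (W A : finType) (F : (W -> A -> R) -> Prop)
  (d : nat) : Prop :=
  exists (x0 : W -> A -> R) (v : 'I_d -> W -> A -> R),
    forall x, F x -> exists c : 'I_d -> R,
      forall w a, x w a = x0 w a + \sum_(i < d) c i * v i w a.

(* Main.v *)
Require Import Defs.
From mathcomp Require Import all_boot all_order all_algebra.
From mathcomp Require Import ring lra.
From Stdlib Require Import FunctionalExtensionality Classical.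
Set Implicit Arguments. Unset Strict Implicit. Unset Printing Implicit Defensive.
Import Order.TTheory GRing.Theory Num.Theory.
Local Open Scope ring_scope.

Section Farkas.
Variable R : realFieldType.
Variable J : finType.

Definition feas (I : finType) (a : I -> J -> R) (b : I -> R) :=
  exists x : J -> R, forall i, \sum_j a i j * x j <= b i.
Definition cert (I : finType) (a : I -> J -> R) (b : I -> R) :=
  exists y : I -> R, (forall i, 0 <= y i) /\
    (forall j, \sum_i y i * a i j = 0) /\ \sum_i y i * b i < 0.

Lemma sum_ind (I : finType) (k : I) (F : I -> R) :
  \sum_i (k == i)%:R * F i = F k.
Proof.
rewrite (bigD1 k) //= eqxx mul1r big1 ?addr0 // => i.
by rewrite eq_sym => /negbTE ->; rewrite mul0r.
Qed.

Lemma farkas_base (I : finType) (a : I -> J -> R) b :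
  (forall i j, a i j = 0) -> feas a b \/ cert a b.
Proof.
move=> a0.
case: (boolP [exists i, b i < 0]) => [/existsP [i0 hi0]| /existsPn hb].
- right; exists (fun i => (i0 == i)%:R); split; first by move=> i; rewrite ler0n.
  split; last by rewrite sum_ind.
  by move=> j; rewrite sum_ind a0.
- left; exists (fun _ => 0) => i; rewrite big1.
  by have := hb i; rewrite -leNgt.
  by move=> j _; rewrite mulr0.
Qed.

Section Elim.
Variables (I : finType) (a : I -> J -> R) (j0 : J).

Definition lamF (p : I * I) : R :=
  if (a p.1 j0 == 0) && (p.1 == p.2) then 1
  else if (0 < a p.1 j0) && (a p.2 j0 < 0) then - a p.2 j0 else 0.
Definition muF (p : I * I) : R :=
  if (a p.1 j0 == 0) && (p.1 == p.2) then 0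
  else if (0 < a p.1 j0) && (a p.2 j0 < 0) then a p.1 j0 else 0.
Definition combF (F : I -> R) (p : I * I) := lamF p * F p.1 + muF p * F p.2.

Lemma lamF_ge0 p : 0 <= lamF p.
Proof.
rewrite /lamF; case: ifP => _ //; case: ifP => // /andP [_ h].
by rewrite oppr_ge0 ltW.
Qed.
Lemma muF_ge0 p : 0 <= muF p.
Proof.
rewrite /muF; case: ifP => _ //; case: ifP => // /andP [h _].
by rewrite ltW.
Qed.
Lemma combF_j0 p : combF (fun i => a i j0) p = 0.
Proof.
rewrite /combF /lamF /muF; case: ifP => [/andP [/eqP -> _]|_].
  by rewrite mulr0 mul0r addr0.
case: ifP => _; last by rewrite !mul0r addr0.
by ring.
Qed.

Lemma comb_sum (y' : I * I -> R) (F : I -> R) :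
  \sum_i (\sum_p y' p * (lamF p * (p.1 == i)%:R + muF p * (p.2 == i)%:R)) * F i
  = \sum_p y' p * combF F p.
Proof.
under eq_bigr do rewrite mulr_suml.
rewrite exchange_big /=; apply: eq_bigr => p _.
under eq_bigr do rewrite -mulrA.
rewrite -mulr_sumr /combF; congr (_ * _).
under eq_bigr do rewrite mulrDl.
rewrite big_split /=; congr (_ + _).
  rewrite -[in RHS](sum_ind p.1) mulr_sumr; apply: eq_bigr => i _; ring.
rewrite -[in RHS](sum_ind p.2) mulr_sumr; apply: eq_bigr => i _; ring.
Qed.

End Elim.

Lemma qle (ap an rp rn bp bn : R) : 0 < ap -> an < 0 ->
  - an * rp + ap * rn <= - an * bp + ap * bn ->
  (bn - rn) / an <= (bp - rp) / ap.
Proof.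
move=> hp hn h.
set u := (bn - rn) / an; set v := (bp - rp) / ap.
have e1 : bn - rn = u * an by rewrite /u mulfVK // ltr0_neq0.
have e2 : bp - rp = v * ap by rewrite /v mulfVK // gt_eqF.
have : 0 <= an * ap * (u - v).
  have -> : an * ap * (u - v) = - an * (bp - rp) + ap * (bn - rn).
    by rewrite e1 e2; ring.
  lra.
move=> h2.
have han : an * ap < 0 by rewrite nmulr_rlt0.
by rewrite -subr_le0 -(nmulr_rge0 _ han).
Qed.

Lemma choose_t (I : finType) (s q : I -> R) :
  (forall p n, 0 < s p -> s n < 0 -> q n <= q p) ->
  exists t, (forall i, 0 < s i -> t <= q i) /\ (forall i, s i < 0 -> q i <= t).
Proof.
move=> h.
case: (pickP [pred i | 0 < s i]) => [p0 hp0 | noP].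
- case: (arg_minP q (P:=[pred i | 0 < s i]) hp0) => m hm hmin.
  exists (q m); split; first by move=> i hi; apply: hmin.
  by move=> i hi; apply: h.
- case: (pickP [pred i | s i < 0]) => [n0 hn0 | noN].
  + case: (arg_maxP q (P:=[pred i | s i < 0]) hn0) => m hm hmax.
    exists (q m); split; first by move=> i hi; have := noP i; rewrite /= hi.
    by move=> i hi; apply: hmax.
  + exists 0; split => i hi; [by have := noP i; rewrite /= hi | by have := noN i; rewrite /= hi].
Qed.

Lemma farkas_ind n : forall (I : finType) (a : I -> J -> R) b (K : {set J}),
  (#|K| <= n)%N -> (forall i j, j \notin K -> a i j = 0) -> feas a b \/ cert a b.
Proof.
elim: n => [|n IH] I a b K hK ha.
  apply: farkas_base => i j; apply: ha.
  by move: hK; rewrite leqn0 => /eqP/cards0_eq ->; rewrite inE.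
case: (set_0Vmem K) => [K0 | [j0 j0K]].
  by apply: farkas_base => i j; apply: ha; rewrite K0 inE.
pose a' := fun p j => combF a j0 (fun i => a i j) p.
pose b' := combF a j0 b.
have hK' : (#|K :\ j0| <= n)%N by move: hK; rewrite (cardsD1 j0 K) j0K.
have ha' : forall p j, j \notin K :\ j0 -> a' p j = 0.
  move=> p j; rewrite !inE negb_and negbK; case/orP => [/eqP -> | hj].
    exact: combF_j0.
  by rewrite /a' /combF !ha // !mulr0 addr0.
case: (IH _ a' b' _ hK' ha') => [[x' hx'] | [y' [y'0 [y'a y'b]]]].
- left.
  pose x0 := fun j => if j == j0 then 0 else x' j.
  pose r := fun i => \sum_j a i j * x0 j.
  pose q := fun i => (b i - r i) / a i j0.
  have hC : forall p, lamF a j0 p * r p.1 + muF a j0 p * r p.2 <=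
                      lamF a j0 p * b p.1 + muF a j0 p * b p.2.
    move=> p; have := hx' p.
    have -> : \sum_j a' p j * x' j = \sum_j a' p j * x0 j.
      apply: eq_bigr => j _; rewrite /x0; case: eqP => [->|//].
      by rewrite /a' combF_j0 !mul0r.
    rewrite /a' /b' /combF /r.
    suff -> : \sum_j (lamF a j0 p * a p.1 j + muF a j0 p * a p.2 j) * x0 j =
      lamF a j0 p * (\sum_j a p.1 j * x0 j) + muF a j0 p * (\sum_j a p.2 j * x0 j) by [].
    rewrite !mulr_sumr -big_split /=; apply: eq_bigr => j _; ring.
  have [t [tP tN]] : exists t, (forall i, 0 < a i j0 -> t <= q i) /\
                               (forall i, a i j0 < 0 -> q i <= t).
    apply: choose_t => pp m hp hm.
    have := hC (pp, m).
    rewrite /lamF /muF /= (gt_eqF hp) /= hp hm /=.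
    exact: qle.
  exists (fun j => if j == j0 then t else x' j) => i.
  rewrite /=.
  have e : \sum_j a i j * (if j == j0 then t else 0) = a i j0 * t.
    rewrite (bigD1 j0) //= eqxx big1 ?addr0 // => j /negbTE ->; by rewrite mulr0.
  have -> : \sum_j a i j * (if j == j0 then t else x' j) = a i j0 * t + r i.
    rewrite -e /r -big_split /=; apply: eq_bigr => j _; rewrite /x0.
    by case: eqP => _; ring.
  have hq : a i j0 != 0 -> a i j0 * q i = b i - r i.
    by move=> hz; rewrite /q mulrC mulfVK.
  case: (ltgtP (a i j0) 0) => h.
  + have := tN i h; rewrite -(ler_nM2l h) hq ?ltr0_neq0 //; lra.
  + have := tP i h; rewrite -(ler_pM2l h) hq ?gt_eqF //; lra.
  + have := hC (i, i); rewrite /lamF /muF /= h !eqxx /= !mul1r !mul0r !addr0.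
    by rewrite add0r.
- right.
  exists (fun i => \sum_p y' p * (lamF a j0 p * (p.1 == i)%:R + muF a j0 p * (p.2 == i)%:R)).
  split.
    move=> i; apply: sumr_ge0 => p _; apply: mulr_ge0 => //.
    by apply: addr_ge0; apply: mulr_ge0; rewrite ?lamF_ge0 ?muF_ge0 ?ler0n.
  split; last by rewrite comb_sum.
  by move=> j; rewrite (comb_sum _ _ _ (fun i => a i j)); exact: y'a.
Qed.

Lemma farkas (I : finType) (a : I -> J -> R) b : feas a b \/ cert a b.
Proof.
apply: (@farkas_ind #|J| I a b setT); first exact: max_card.
by move=> i j; rewrite inE.
Qed.

Lemma sum_unit (F : unit -> R) : \sum_(i : unit) F i = F tt.
Proof. by rewrite (bigD1 tt) //= big1 ?addr0 // => -[]. Qed.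

Lemma sumN_ind (I : finType) (k : I) (F : I -> R) :
  \sum_i - (k == i)%:R * F i = - F k.
Proof. by under eq_bigr do rewrite mulNr; rewrite sumrN sum_ind. Qed.

Lemma farkas_cone (K : finType) (M : K -> J -> R) (e : J -> R) :
  (forall x : J -> R, (forall j, 0 <= x j) ->
     (forall k, \sum_j M k j * x j = 0) -> \sum_j e j * x j < 1) ->
  exists z : K -> R, forall j, e j <= \sum_k z k * M k j.
Proof.
move=> H.
pose a := fun (i : ((J + K) + (K + unit))%type) j =>
  match i with
  | inl (inl j') => - (j' == j)%:R
  | inl (inr k) => M k j
  | inr (inl k) => - M k j
  | inr (inr _) => - e j end.
pose b := fun (i : ((J + K) + (K + unit))%type) =>
  match i with inr (inr _) => -1 | _ => 0 end : R.
case: (farkas a b) => [[x hx] | [y [y0 [ya yb]]]].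
- exfalso.
  have x0 : forall j, 0 <= x j.
    by move=> j; have := hx (inl (inl j)); rewrite /= sumN_ind oppr_le0.
  have Mx : forall k, \sum_j M k j * x j = 0.
    move=> k; apply/eqP; rewrite eq_le; apply/andP; split.
      exact: (hx (inl (inr k))).
    have := hx (inr (inl k)); rewrite /=.
    under eq_bigr do rewrite mulNr.
    by rewrite sumrN oppr_le0.
  have := H x x0 Mx; have := hx (inr (inr tt)); rewrite /=.
  under eq_bigr do rewrite mulNr.
  rewrite sumrN lerN2; lra.
- move: yb; rewrite !big_sumType sum_unit /= !big1 ?mulr0 // ?add0r;
    try by move=> *; rewrite mulr0.
  rewrite mulrN1 oppr_lt0 => mu0.
  pose mu := y (inr (inr tt)).
  exists (fun k => (y (inl (inr k)) - y (inr (inl k))) / mu) => j.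
  have := ya j; rewrite !big_sumType sum_unit /=.
  rewrite (eq_bigr (fun j' => - (y (inl (inl j')) * (j' == j)%:R))); last first.
    by move=> j' _; rewrite mulrN.
  rewrite sumrN.
  rewrite (eq_bigr (fun j' => (j == j')%:R * y (inl (inl j')))); last first.
    by move=> j' _; rewrite mulrC eq_sym.
  rewrite sum_ind.
  under [X in _ + (X + _) = _ -> _]eq_bigr do rewrite mulrN.
  rewrite sumrN => h.
  have e1 : \sum_k (y (inl (inr k)) - y (inr (inl k))) / mu * M k j =
    (\sum_k y (inl (inr k)) * M k j - \sum_k y (inr (inl k)) * M k j) / mu.
    rewrite -sumrB mulr_suml; apply: eq_bigr => k _; rewrite /mu; field.
    by rewrite gt_eqF.
  rewrite e1 ler_pdivlMr // -/mu.
  have := y0 (inl (inl j)); rewrite -/mu in h mu0 *.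
  lra.
Qed.

End Farkas.

Section Main.
Variables (R : realFieldType) (W S A : finType) (beta : W -> S -> R).
Hypothesis hb : kernel beta.

Definition dd := (#|Uset beta| * (#|A| - 1))%N.
Definition Small (g : W -> A -> R) :=
  exists F, face (Gset beta) F /\ F g /\ affdim_le F dd.
Definition Seg (g : W -> A -> R) (w0 : W) (v : A -> R) (e : R) :=
  0 < e /\ (exists a, v a != 0) /\
  forall t, - e < t < e -> Gset beta (fun w a => g w a + (if w == w0 then t * v a else 0)).

Lemma sum_ind1 (I : finType) (k : I) : \sum_(i : I) (i == k)%:R = 1 :> R.
Proof.
rewrite (bigD1 k) //= eqxx big1 ?addr0 // => i /negbTE -> //.
Qed.

Lemma kernel_fbeta (pi : S -> A -> R) : kernel pi -> kernel (fbeta beta pi).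
Proof.
move=> hp w; split.
- move=> a; apply: sumr_ge0 => s _; apply: mulr_ge0; [exact: (hb w).1 | exact: (hp s).1].
- rewrite /fbeta exchange_big /=.
  under eq_bigr => s _ do rewrite -mulr_sumr (hp s).2 mulr1.
  exact: (hb w).2.
Qed.

Lemma Gset_simplex (g : W -> A -> R) : Gset beta g -> forall w, simplex (g w).
Proof. by case=> pi [hp ->]; apply: kernel_fbeta. Qed.

Lemma supp_unique s w w' : s \notin Uset beta -> 0 < beta w s -> w' != w ->
  beta w' s = 0.
Proof.
rewrite /Uset inE -leqNgt => hc hw hne.
have hn : ~~ (0 < beta w' s).
  apply/negP => hw'.
  have : (1 < #|[set w | (0 < beta w s)%R]|)%N.
    by apply/card_gt1P; exists w', w; rewrite !inE hw hw' hne.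
  by rewrite ltnNge hc.
apply/eqP; move: hn; rewrite lt0r negb_and negbK (hb w').1 orbF //.
Qed.

Lemma seg_of (pi : S -> A -> R) s w a b : kernel pi -> s \notin Uset beta -> 0 < beta w s ->
  a != b -> 0 < pi s a -> 0 < pi s b ->
  Seg (fbeta beta pi) w (fun a' => beta w s * ((a' == a)%:R - (a' == b)%:R))
      (Num.min (pi s a) (pi s b)).
Proof.
move=> hp hs hw hab ha hb'.
have h1 : Num.min (pi s a) (pi s b) <= pi s a by rewrite ge_min lexx.
have h2 : Num.min (pi s a) (pi s b) <= pi s b by rewrite ge_min lexx orbT.
split; first by rewrite lt_min ha hb'.
split; first by exists a; rewrite eqxx (negbTE hab) subr0 mulr1 gt_eqF.
move=> t /andP [ht1 ht2].
exists (fun s' a' => pi s' a' + (if s' == s then t * ((a' == a)%:R - (a' == b)%:R) else 0)).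
split.
- move=> s'; split.
  + move=> a'; case: eqP => [-> | _]; last by rewrite addr0; exact: (hp s').1.
    case: (eqVneq a' a) => [-> | ha'].
      rewrite (negbTE hab) subr0 mulr1; lra.
    case: (eqVneq a' b) => [-> | hb''].
      rewrite sub0r mulrN1; lra.
    rewrite subrr mulr0 addr0; exact: (hp s).1.
  + rewrite big_split /= (hp s').2; case: eqP => _; last by rewrite big1 // addr0.
    by rewrite -mulr_sumr sumrB !sum_ind1 subrr mulr0 addr0.
- apply: functional_extensionality => w'; apply: functional_extensionality => a'.
  rewrite /fbeta.
  under [RHS]eq_bigr do rewrite mulrDr.
  rewrite big_split /=; congr (_ + _).
  rewrite (bigD1 s) //= eqxx big1 ?addr0; last first.
    by move=> s' /negbTE ->; rewrite mulr0.
  case: eqP => [-> | /eqP hne]; first by ring.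
  by rewrite (supp_unique hs hw hne) mul0r.
Qed.


Lemma sum_pairE (I1 I2 : finType) (F : I1 * I2 -> R) :
  \sum_p F p = \sum_i \sum_j F (i, j).
Proof. by rewrite pair_big; apply: eq_bigr => -[]. Qed.

Lemma sum_indC (I : finType) (k : I) (F : I -> R) :
  \sum_i (i == k)%:R * F i = F k.
Proof. by under eq_bigr do rewrite eq_sym; rewrite sum_ind. Qed.

Lemma pos_entry (I : finType) (f : I -> R) : \sum_i f i = 1 -> exists i, 0 < f i.
Proof.
move=> h; apply: NNPP => hn.
have : \sum_i f i <= 0.
  apply: sumr_le0 => i _; rewrite leNgt; apply/negP => hi; apply: hn; by exists i.
rewrite h; lra.
Qed.

Lemma row_point (f : A -> R) a1 : \sum_a f a = 1 -> (forall a, a != a1 -> f a = 0) ->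
  f a1 = 1.
Proof.
move=> h1 h0; rewrite -h1 (bigD1 a1) //= big1 ?addr0 // => a /h0 //.
Qed.

Lemma ident (f : A -> R) a0 a : \sum_a f a = 1 ->
  \sum_(b in [set~ a0]) f b * ((a == b)%:R - (a == a0)%:R) = f a - (a == a0)%:R.
Proof.
move=> h1.
rewrite (eq_bigl (fun b => b != a0)); last by move=> b; rewrite in_setC1.
have hrest : \sum_(b | b != a0) f b = 1 - f a0.
  by rewrite -h1 [in RHS](bigD1 a0) //=; lra.
under eq_bigr do rewrite mulrBr.
rewrite sumrB -mulr_suml hrest.
case: (eqVneq a a0) => [-> | ha].
  rewrite big1; first by rewrite mulr1 sub0r opprB.
  by move=> b hb0; rewrite eq_sym (negbTE hb0) mulr0.
rewrite (bigD1 a) //= eqxx mulr1 big1 ?addr0; first by rewrite mulr0 subr0.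
by move=> b /andP [_ hb0]; rewrite eq_sym (negbTE hb0) mulr0.
Qed.

Lemma lin_fbeta (l : W -> A -> R) (pi : S -> A -> R) :
  \sum_w \sum_a l w a * fbeta beta pi w a =
  \sum_s \sum_a pi s a * \sum_w l w a * beta w s.
Proof.
rewrite /fbeta.
under eq_bigr do under eq_bigr do rewrite mulr_sumr.
rewrite exchange_big /=.
under eq_bigr do rewrite exchange_big /=.
rewrite exchange_big /=.
apply: eq_bigr => s _; apply: eq_bigr => a _; rewrite mulr_sumr.
by apply: eq_bigr => w _; ring.
Qed.

Lemma small_lemma (pi : S -> A -> R) : kernel pi ->
  (forall pi' : S -> A -> R, kernel pi' -> fbeta beta pi' = fbeta beta pi ->
     forall s, s \notin Uset beta -> forall w, 0 < beta w s ->
     forall a b, 0 < pi' s a -> 0 < pi' s b -> a = b) ->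
  Small (fbeta beta pi).
Proof.
move=> hp H.
set g := fbeta beta pi.
pose U := Uset beta.
pose Bp := fun (p : S * A) =>
  [&& p.1 \notin U, [exists w, 0 < beta w p.1] & pi p.1 p.2 == 0].
pose M := fun (k : (S + (W * A))%type) (j : ((S * A) + unit)%type) =>
  match k, j with
  | inl s, inl p => (p.1 == s)%:R
  | inl s, inr _ => -1
  | inr q, inl p => (p.2 == q.2)%:R * beta q.1 p.1
  | inr q, inr _ => - g q.1 q.2 end.
pose e := fun j : ((S * A) + unit)%type =>
  match j with inl p => (Bp p)%:R | inr _ => 0 end : R.
have [z hz] : exists z, forall j, e j <= \sum_k z k * M k j.
  apply: farkas_cone => x x0 hM.
  pose lam := x (inr tt).
  pose pp := fun s a => x (inl (s, a)).
  have hrow : forall s, \sum_a pp s a = lam.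
    move=> s; have := hM (inl s); rewrite big_sumType sum_unit sum_pairE /=.
    under eq_bigr do rewrite -mulr_sumr.
    rewrite sum_indC => h; rewrite /pp /lam; lra.
  have hcol : forall w a, \sum_s beta w s * pp s a = lam * g w a.
    move=> w a; have := hM (inr (w, a)); rewrite big_sumType sum_unit sum_pairE /=.
    under eq_bigr => s _ do under eq_bigr => a' _ do rewrite -mulrA.
    under eq_bigr do rewrite sum_indC.
    move=> h; rewrite /pp /lam; lra.
  rewrite ltNge; apply/negP => h1.
  move: h1; rewrite big_sumType sum_unit sum_pairE /= mul0r addr0 => h1.
  have [s0 [b0 [hB hpos]]] : exists s b, Bp (s, b) /\ 0 < pp s b.
    apply: NNPP => hn; move: h1; apply/negP; rewrite -ltNge.
    apply: (le_lt_trans (y := 0)); last exact: ltr01.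
    apply: sumr_le0 => s _; apply: sumr_le0 => a _.
    case hBp: (Bp (s, a)); last by rewrite mul0r.
    rewrite mul1r leNgt; apply/negP => hx; apply: hn; by exists s, a.
  have hlam : 0 < lam.
    rewrite -(hrow s0); apply: lt_le_trans hpos _.
    rewrite (bigD1 b0) //= lerDl; apply: sumr_ge0 => a _; exact: x0.
  pose pi2 := fun s a => pp s a / lam.
  pose pi3 := fun s a => (pi s a + pi2 s a) / 2.
  have hpi2 : forall s a, 0 <= pi2 s a.
    by move=> s a; apply: divr_ge0; [exact: x0 | exact: ltW].
  have hk3 : kernel pi3.
    move=> s; split.
      move=> a; apply: divr_ge0 => //; apply: addr_ge0; [exact: (hp s).1 | exact: hpi2].
    rewrite /pi3 -mulr_suml big_split /= (hp s).2 /pi2 -mulr_suml hrow divff ?gt_eqF //.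
    lra.
  have hf3 : fbeta beta pi3 = g.
    apply: functional_extensionality => w; apply: functional_extensionality => a.
    have -> : fbeta beta pi3 w a = (g w a) / 2 + (\sum_s beta w s * pp s a) / lam / 2.
      rewrite /g /fbeta !mulr_suml -big_split; apply: eq_bigr => s _ /=.
      by rewrite /pi3 /pi2; field; rewrite gt_eqF.
    by rewrite hcol; field; rewrite gt_eqF.
  move: hB; rewrite /Bp /= => /and3P [hs0 /existsP [w0 hw0] /eqP hpi0].
  have [a1 ha1] := pos_entry ((hp s0).2).
  have h3a : 0 < pi3 s0 a1 by rewrite /pi3; have := hpi2 s0 a1; lra.
  have h3b : 0 < pi3 s0 b0.
    rewrite /pi3 hpi0 add0r divr_gt0 // /pi2 divr_gt0 //.
  have hab := H pi3 hk3 hf3 s0 hs0 w0 hw0 a1 b0 h3a h3b.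
  by move: ha1; rewrite hab hpi0 ltxx.
have hzS : forall s a, (Bp (s, a))%:R <= z (inl s) + \sum_w z (inr (w, a)) * beta w s.
  move=> s a; have := hz (inl (s, a)); rewrite big_sumType sum_pairE /=.
  under eq_bigr do rewrite mulrC.
  rewrite sum_ind.
  under eq_bigr => w _ do under eq_bigr => a' _ do rewrite mulrCA.
  by under eq_bigr do rewrite sum_ind.
have hzN : \sum_s z (inl s) <= \sum_w \sum_a - z (inr (w, a)) * g w a.
  have := hz (inr tt); rewrite /= big_sumType sum_pairE /=.
  under eq_bigr do rewrite mulrN1.
  under [X in _ <= _ + X]eq_bigr do under eq_bigr do rewrite mulrN -mulNr.
  rewrite sumrN; lra.
pose l := fun w a => - z (inr (w, a)).
pose c := \sum_w \sum_a l w a * g w a.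
have key : forall pi'', kernel pi'' ->
    \sum_w \sum_a l w a * fbeta beta pi'' w a +
    \sum_s \sum_a (Bp (s, a))%:R * pi'' s a <= c.
  move=> pi'' hp''; rewrite lin_fbeta -big_split /=.
  apply: (le_trans (y := \sum_s z (inl s))); last exact: hzN.
  apply: (le_trans (y := \sum_s \sum_a pi'' s a * z (inl s))).
    apply: ler_sum => s _; rewrite -big_split /=; apply: ler_sum => a _.
    have := hzS s a; have h0 := (hp'' s).1 a.
    rewrite /l.
    under eq_bigr do rewrite mulNr.
    rewrite sumrN => h; nra.
  rewrite le_eqVlt; apply/orP; left; apply/eqP.
  apply: eq_bigr => s _; by rewrite -mulr_suml (hp'' s).2 mul1r.
pose F := fun x : W -> A -> R => Gset beta x /\ \sum_w \sum_a l w a * x w a = c.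
have hdet : forall pi'', kernel pi'' ->
    \sum_w \sum_a l w a * fbeta beta pi'' w a = c ->
    forall s a, Bp (s, a) -> pi'' s a = 0.
  move=> pi'' hp'' hc s a hB.
  have hge : forall s, 0 <= \sum_a (Bp (s, a))%:R * pi'' s a.
    by move=> s'; apply: sumr_ge0 => a' _; apply: mulr_ge0; [exact: ler0n | exact: (hp'' s').1].
  have hS : \sum_s \sum_a (Bp (s, a))%:R * pi'' s a = 0.
    apply/eqP; rewrite eq_le; apply/andP; split.
      by have := key _ hp''; rewrite hc; lra.
    by apply: sumr_ge0 => s' _; exact: hge.
  have h2 := @psumr_eq0P _ _ _ _ (fun s' _ => hge s') hS s isT.
  have h3 := @psumr_eq0P _ _ _ _ (fun a' _ => mulr_ge0 (ler0n _ _) ((hp'' s).1 a')) h2 a isT.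
  by move: h3; rewrite /= hB mul1r.
have hpriv : forall pi'', kernel pi'' ->
    \sum_w \sum_a l w a * fbeta beta pi'' w a = c ->
    forall s, s \notin U -> forall w, 0 < beta w s -> pi'' s = pi s.
  move=> pi'' hp'' hc s hs w hw.
  have [a1 ha1] := pos_entry ((hp s).2).
  have hz0 : forall a, a != a1 -> pi s a = 0.
    move=> a ha; apply/eqP; rewrite eq_le (hp s).1 andbT leNgt; apply/negP => hpa.
    have e1 := H pi hp erefl s hs w hw a a1 hpa ha1.
    by move: ha; rewrite e1 eqxx.
  have hz0' : forall a, a != a1 -> pi'' s a = 0.
    move=> a ha; apply: (hdet _ hp'' hc).
    rewrite /Bp /= hs /= hz0 // eqxx andbT; apply/existsP; by exists w.
  apply: functional_extensionality => a.
  case: (eqVneq a a1) => [-> | ha].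
    by rewrite (row_point (hp'' s).2 hz0') (row_point (hp s).2 hz0).
  by rewrite hz0 // hz0'.
exists F; split.
  exists l, c; split; last by [].
  move=> y [pi'' [hp'' ->]]; have := key _ hp''.
  have : 0 <= \sum_s \sum_a (Bp (s, a))%:R * pi'' s a.
    apply: sumr_ge0 => s _; apply: sumr_ge0 => a _.
    by apply: mulr_ge0; [exact: ler0n | exact: (hp'' s).1].
  lra.
split; first by split => //; exists pi.
case: (pickP (@predT A)) => [a0 _ | hA]; last first.
  exists (fun _ _ => 0), (fun _ _ _ => 0) => x _; exists (fun _ => 0) => w a.
  by have := hA a.
pose X := setX U [set~ a0].
have -> : dd = #|X| by rewrite /dd cardsX cardsC1 subn1.
pose pi0 := fun s a => if s \in U then (a == a0)%:R else pi s a.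
exists (fbeta beta pi0),
  (fun i w a => beta w (enum_val i).1 * ((a == (enum_val i).2)%:R - (a == a0)%:R)).
move=> x [[pi'' [hp'' ->]] hc].
exists (fun i => pi'' (enum_val i).1 (enum_val i).2) => w a.
have -> : \sum_(i < #|X|) pi'' (enum_val i).1 (enum_val i).2 *
     (beta w (enum_val i).1 * ((a == (enum_val i).2)%:R - (a == a0)%:R)) =
   \sum_(p in X) pi'' p.1 p.2 * (beta w p.1 * ((a == p.2)%:R - (a == a0)%:R)).
  by rewrite [RHS]big_enum_val.
rewrite (eq_bigl (fun p => (p.1 \in U) && (p.2 \in [set~ a0]))); last first.
  by move=> [s b]; rewrite /X in_setX.
rewrite -(pair_big (fun s => s \in U) (fun b => b \in [set~ a0])
   (fun s b => pi'' s b * (beta w s * ((a == b)%:R - (a == a0)%:R)))) /=.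
have -> : \sum_(s in U) \sum_(b in [set~ a0])
     pi'' s b * (beta w s * ((a == b)%:R - (a == a0)%:R)) =
   \sum_(s in U) beta w s * (pi'' s a - (a == a0)%:R).
  apply: eq_bigr => s _; rewrite -(ident a0 a (hp'' s).2) mulr_sumr.
  by apply: eq_bigr => b _; ring.
rewrite big_mkcond /fbeta -big_split /=; apply: eq_bigr => s _.
rewrite /pi0; case: ifP => hs; first by ring.
rewrite addr0.
case: (boolP (0 < beta w s)) => hw.
  by rewrite (hpriv _ hp'' hc s (negbT hs) w hw).
have -> : beta w s = 0.
  by apply/eqP; move: hw; rewrite lt0r negb_and negbK (hb w).1 orbF.
by rewrite !mul0r.
Qed.


Lemma dichotomy (g : W -> A -> R) : Gset beta g -> Small g \/ exists w0 v e, Seg g w0 v e.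
Proof.
case=> pi [hp ->].
case: (classic (forall pi' : S -> A -> R, kernel pi' -> fbeta beta pi' = fbeta beta pi ->
     forall s, s \notin Uset beta -> forall w, 0 < beta w s ->
     forall a b, 0 < pi' s a -> 0 < pi' s b -> a = b)) => H.
  by left; apply: small_lemma.
right; apply: NNPP => hn; apply: H => pi' hp' e s hs w hw a b ha hb'.
apply: NNPP => hab; apply: hn.
exists w, (fun a' => beta w s * ((a' == a)%:R - (a' == b)%:R)),
  (Num.min (pi' s a) (pi' s b)).
rewrite -e; apply: seg_of => //; exact/eqP.
Qed.

Lemma seg_gset g w0 v e : Seg g w0 v e -> Gset beta g.
Proof.
case=> he [_ hg]; have := hg 0.
have -> : (fun w a => g w a + (if w == w0 then 0 * v a else 0)) = g.
  apply: functional_extensionality => w; apply: functional_extensionality => a.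
  by case: ifP => _; rewrite ?mul0r addr0.
by apply; rewrite oppr_lt0 he.
Qed.

Definition Theta := ({g : W -> A -> R | Gset beta g} * option (W * (A -> R) * R))%type.

Definition Gt (th : Theta) (w : W) (p : A -> R) : Prop :=
  let g := sval th.1 in
  match th.2 with
  | None => Small g /\ p = g w
  | Some (w0, v, e) => Seg g w0 v e /\
      (if w == w0 then exists t, - e < t < e /\ p = (fun a => g w a + t * v a)
       else p = g w)
  end.

Lemma part_cover (g : W -> A -> R) : Gset beta g <-> exists th, forall w, Gt th w (g w).
Proof.
split.
- move=> hg; case: (dichotomy hg) => [hs | [w0 [v [e hseg]]]].
    by exists (exist _ g hg, None) => w /=.
  exists (exist _ g hg, Some (w0, v, e)) => w /=; split => //.
  case: ifP => _ //; exists 0; split.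
    by have := hseg.1 => he; rewrite oppr_lt0 he.
  by apply: functional_extensionality => a; rewrite mul0r addr0.
- case=> [[[g0 hg0] [[[w0 v] e]|]]] /= H.
  + have [hseg [t [ht ht']]] : Seg g0 w0 v e /\ exists t, - e < t < e /\
        g w0 = (fun a => g0 w0 a + t * v a).
      by have := H w0; rewrite /Gt /= eqxx.
    have -> : g = (fun w a => g0 w a + (if w == w0 then t * v a else 0)).
      apply: functional_extensionality => w; apply: functional_extensionality => a.
      case: (eqVneq w w0) => [-> | hw]; first by rewrite ht'.
      have := (H w).2; rewrite /= (negbTE hw) => ->; by rewrite addr0.
    exact: hseg.2.2.
  + have -> : g = g0.
      by apply: functional_extensionality => w; exact: (H w).2.
    exact: hg0.
Qed.

Lemma part_simplex th w p : Gt th w p -> simplex p.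
Proof.
case: th => [[g hg] [[[w0 v] e]|]] /=.
- case=> hseg; case: ifP => hw.
    case=> t [ht ->].
    have hg' := hseg.2.2 t ht.
    have := Gset_simplex hg' w; rewrite hw.
    by congr simplex; apply: functional_extensionality.
  by move=> ->; apply: Gset_simplex.
- by case=> _ ->; apply: Gset_simplex.
Qed.

Lemma conv_open (e t1 t2 tau : R) : - e < t1 < e -> - e < t2 < e -> 0 <= tau <= 1 ->
  - e < tau * t1 + (1 - tau) * t2 < e.
Proof.
move=> /andP [h1 h2] /andP [h3 h4] /andP [h5 h6].
have p2 : 0 <= (1 - tau) * (e - t2) by apply: mulr_ge0; lra.
have p4 : 0 <= (1 - tau) * (t2 + e) by apply: mulr_ge0; lra.
case: (eqVneq tau 0) => [-> | hz].
  rewrite mul0r add0r subr0 mul1r; apply/andP; split; lra.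
have htau : 0 < tau by rewrite lt0r hz h5.
have p1 : 0 < tau * (e - t1) by apply: mulr_gt0; lra.
have p3 : 0 < tau * (t1 + e) by apply: mulr_gt0; lra.
apply/andP; split; lra.
Qed.

Lemma part_convex th w : convex_set (Gt th w).
Proof.
move=> x y tau.
case: th => [[g hg] [[[w0 v] e]|]] /=.
- case=> hseg hx [_ hy] htau; split => //; move: hx hy; case: ifP => hw.
    case=> t1 [ht1 ->] [t2 [ht2 ->]].
    exists (tau * t1 + (1 - tau) * t2); split; first exact: conv_open.
    by apply: functional_extensionality => a; ring.
  move=> -> ->; apply: functional_extensionality => a; ring.
- case=> hs -> [_ ->] _; split => //.
  by apply: functional_extensionality => a; ring.
Qed.

Lemma part_vertex th x : vertex (fun g => forall w, Gt th w (g w)) x ->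
  exists F, face (Gset beta) F /\ F x /\ affdim_le F dd.
Proof.
case: th => [[g hg] [[[w0 v] e]|]] /= [hx hv].
- exfalso.
  have [hseg [t [ht ht']]] : Seg g w0 v e /\ exists t, - e < t < e /\
        x w0 = (fun a => g w0 a + t * v a).
    by have := hx w0; rewrite /Gt /= eqxx.
  case: (hseg) => he [[a hva] _].
  move: ht => /andP [ht1 ht2].
  pose m := Num.min (e - t) (e + t).
  have hm1 : m <= e - t by rewrite ge_min lexx.
  have hm2 : m <= e + t by rewrite ge_min lexx orbT.
  have hm0 : 0 < m by rewrite lt_min; apply/andP; split; lra.
  pose th := (exist (fun g => Gset beta g) g hg, Some (w0, v, e)).
  pose yd := fun d => (fun w a => if w == w0 then g w a + (t + d) * v a else x w a).
  have hyz : forall d, - (m / 2) <= d -> d <= m / 2 -> forall w', Gt th w' (yd d w').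
    move=> d hd1 hd2 w'; rewrite /Gt /=; split => //.
    case: (eqVneq w' w0) => [-> | hw].
      exists (t + d); split; last first.
        by apply: functional_extensionality => a'; rewrite /yd eqxx.
      apply/andP; split; lra.
    have := hx w'; rewrite /Gt /= (negbTE hw); case=> _ hxw.
    by apply: functional_extensionality => a'; rewrite /yd (negbTE hw) hxw.
  have hm2' : 0 < m / 2 by rewrite divr_gt0.
  have hy := hyz (m / 2) ltac:(lra) ltac:(lra).
  have hz := hyz (- (m / 2)) ltac:(lra) ltac:(lra).
  have hmid : x = (fun w a => 1 / 2 * yd (m / 2) w a + (1 - 1 / 2) * yd (- (m / 2)) w a).
    apply: functional_extensionality => w'; apply: functional_extensionality => a'.
    rewrite /yd; case: (eqVneq w' w0) => [-> | hw].
      by rewrite ht' /=; field.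
    by field.
  have [hyx _] := hv _ _ (1 / 2) hy hz ltac:(apply/andP; split; lra) hmid.
  have := congr1 (fun f => f w0 a) hyx; rewrite /yd eqxx ht' /= => h.
  have : m / 2 * v a = 0 by lra.
  by move/eqP; rewrite mulf_eq0 (negbTE hva) orbF gt_eqF.
- have hxg : x = g.
    by apply: functional_extensionality => w; exact: (hx w).2.
  subst x.
  case: (pickP (@predT W)) => [w _ | hW].
    by case: (hx w).
  exists (Gset beta); split.
    exists (fun _ _ => 0), 0; split.
      by move=> y _; rewrite big1 // => w; have := hW w.
    by move=> y; rewrite big1 => [|w]; [split => [h|[]] | have := hW w].
  split => //.
  exists g, (fun _ _ _ => 0) => y _; exists (fun _ => 0) => w; by have := hW w.
Qed.


End Main.

Theorem proposition5 (R : realFieldType) (W S A : finType) (beta : W -> S -> R) :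
  kernel beta ->
  exists (Theta : Type) (Gt : Theta -> W -> (A -> R) -> Prop),
    (forall g, Gset beta g <-> exists th, forall w, Gt th w (g w)) /\
    (forall th w, (forall p, Gt th w p -> simplex p) /\ convex_set (Gt th w)) /\
    (forall th x, vertex (fun g => forall w, Gt th w (g w)) x ->
       exists F, face (Gset beta) F /\ F x /\
         affdim_le F (#|Uset beta| * (#|A| - 1))%N).
Proof.
move=> hb.
exists (@Theta R W S A beta), (@Gt R W S A beta).
split; first by move=> g; apply: part_cover.
split; first by move=> th w; split; [move=> p; apply: part_simplex | apply: part_convex].
move=> th x hv; have := @part_vertex R W S A beta th x hv. by [].
Qed.
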